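(* Let $\mathcal{A}$ be a $0/1$-arrangement in $\mathbb{Q}^n$ admitting a nice partition $\pi$, and let $H_A,H_B\in\mathcal{A}$ with $A,B$ conflicting. Then $H_A$ and $H_B$ lie in different blocks of $\pi$.
   Context: $H_I=\ker\big(\sum_{i\in I}x_i\big)\subseteq\mathbb{Q}^n$ for $I\subseteq\{1,\dots,n\}$. A $0/1$-arrangement is an arrangement all of whose hyperplanes are of the form $H_I$ for nonempty $I$. For a $0/1$-arrangement $\mathcal{A}$ and $H_A,H_B\in\mathcal{A}$ with $A\neq B$, the sets $A,B$ are conflicting if either (1) $A\cap B\neq\emptyset$, $A\not\subseteq B$ and $B\not\subseteq A$; or (2) $A\cap B=\emptyset$ or $A\subset B$ or $B\subset A$, and $H_{A\triangle B}\notin\mathcal{A}$ ($\triangle$ = symmetric difference). A partition $\pi=(\pi_1,\dots,\pi_s)$ of $\mathcal{A}$ is independent if for every choice $H_i\in\pi_i$ the $s$ defining forms are linearly independent; for $X\in L(\mathcal{A})$ the induced partition $\pi_X$ of $\mathcal{A}_X=\{H\in\mathcal{A}:X\subseteq H\}$ consists of the nonempty sets $\pi_i\cap\mathcal{A}_X$; $\pi$ is nice (a factorization) if it is independent and for every $X\in L(\mathcal{A})\setminus\{V\}$ the induced partition $\pi_X$ has a block which is a singleton. *)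

(* Defs.v *)
From mathcomp Require Import all_boot all_order all_algebra.
Set Implicit Arguments. Unset Strict Implicit. Unset Printing Implicit Defensive.
Import GRing.Theory.
Local Open Scope ring_scope.

Definition form (n : nat) (I : {set 'I_n}) : 'rV[rat]_n :=
  \row_j (j \in I)%:R.

Definition hyp (n : nat) (I : {set 'I_n}) (x : 'rV[rat]_n) : Prop :=
  \sum_(j in I) x 0 j = 0.

(* A 0/1-arrangement: a finite set of hyperplanes H_I, I nonempty,
   represented by the set of their index sets I. *)
Definition zo_arrangement (n : nat) (A : {set {set 'I_n}}) : Prop :=
  set0 \notin A.

Definition conflicting (n : nat) (Arr : {set {set 'I_n}}) (A B : {set 'I_n}) : Prop :=
  A \in Arr /\ B \in Arr /\ A != B /\
  ( (A :&: B != set0 /\ ~~ (A \subset B) /\ ~~ (B \subset A))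
  \/ ((A :&: B == set0 \/ A \proper B \/ B \proper A)
      /\ ((A :\: B) :|: (B :\: A)) \notin Arr) ).

Definition is_partition (n s : nat) (Arr : {set {set 'I_n}})
    (pi : 'I_s -> {set {set 'I_n}}) : Prop :=
  (forall i, pi i != set0) /\
  (forall i j, i != j -> [disjoint pi i & pi j]) /\
  (\bigcup_(i < s) pi i = Arr).

Definition independent_partition (n s : nat) (pi : 'I_s -> {set {set 'I_n}}) : Prop :=
  forall h : 'I_s -> {set 'I_n}, (forall i, h i \in pi i) ->
    row_free (\matrix_(i < s, j < n) form (h i) 0 j).

(* The intersection X = cap_{I in S} H_I of a subset S of the arrangement;
   L(A) consists exactly of these X for S \subset A (S = set0 gives V). *)
Definition meet (n : nat) (S : {set {set 'I_n}}) (x : 'rV[rat]_n) : Prop :=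
  forall I, I \in S -> hyp I x.

Definition sub_hyp (n : nat) (X : 'rV[rat]_n -> Prop) (J : {set 'I_n}) : Prop :=
  forall x, X x -> hyp J x.

(* Nice partition (factorization): independent, and for every X in L(A)
   with X <> V, the induced partition pi_X of A_X has a singleton block,
   i.e. some block pi_i meets A_X = {H in A | X \subseteq H} in exactly
   one hyperplane. *)
Definition nice_partition (n s : nat) (Arr : {set {set 'I_n}})
    (pi : 'I_s -> {set {set 'I_n}}) : Prop :=
  is_partition Arr pi /\ independent_partition pi /\
  forall S : {set {set 'I_n}}, S \subset Arr ->
    (exists x, ~ meet S x) ->
    exists i : 'I_s, exists J, J \in pi i /\ sub_hyp (meet S) J /\
      forall K, K \in pi i -> sub_hyp (meet S) K -> K = J.

(* Main.v *)
Require Import Defs.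
From mathcomp Require Import all_boot all_order all_algebra.
From mathcomp Require Import lra.
Set Implicit Arguments. Unset Strict Implicit. Unset Printing Implicit Defensive.
Import GRing.Theory Num.Theory.
Local Open Scope ring_scope.

Lemma sum_ind n (X : {set 'I_n}) p : \sum_(j in X) ((j == p)%:R : rat) = (p \in X)%:R.
Proof.
case: (boolP (p \in X)) => pX.
  rewrite (bigD1 p) //= eqxx big1 ?addr0 // => j /andP[_ /negbTE ->] //.
rewrite big1 // => j jX; case: eqP => // jp; subst; by rewrite jX in pX.
Qed.

Definition vec n (p q r : 'I_n) (a b c : rat) : 'rV[rat]_n :=
  \row_j (a * (j == p)%:R + b * (j == q)%:R + c * (j == r)%:R).

Lemma hyp_vec n (X : {set 'I_n}) p q r a b c :
  hyp X (vec p q r a b c) <-> a * (p \in X)%:R + b * (q \in X)%:R + c * (r \in X)%:R = 0.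
Proof.
rewrite /hyp /vec.
under eq_bigr do rewrite mxE.
by rewrite !big_split /= -!mulr_sumr !sum_ind.
Qed.

Section Key.
Variables (n : nat) (A B C : {set 'I_n}).
Hypothesis H : forall x, hyp A x -> hyp B x -> hyp C x.

Lemma outP x : x \notin A -> x \notin B -> x \notin C.
Proof.
move=> xA xB; apply/negP => xC.
have := H (x:=vec x x x 1 0 0).
rewrite !hyp_vec (negbTE xA) (negbTE xB) xC /= => /(_ ltac:(lra) ltac:(lra)).
rewrite ?mulr1n ?mulr0n; lra.
Qed.

Lemma regionP x y : (x \in A) = (y \in A) -> (x \in B) = (y \in B) -> (x \in C) = (y \in C).
Proof.
move=> eA eB.
have := H (x:=vec x y y 1 (-1) 0).
rewrite !hyp_vec eA eB.
case: (y \in A); case: (y \in B); case: (x \in C); case: (y \in C) => //=;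
  rewrite ?mulr1n ?mulr0n => h; (have := h ltac:(lra) ltac:(lra)); lra.
Qed.

Lemma tripleP p q r : p \in A -> p \notin B -> q \notin A -> q \in B ->
  r \in A -> r \in B -> (p \in C)%:R + (q \in C)%:R = (r \in C)%:R :> rat.
Proof.
move=> pA pB qA qB rA rB.
have := H (x:=vec p q r 1 1 (-1)).
rewrite !hyp_vec pA qB rA rB (negbTE pB) (negbTE qA) /=.
case: (p \in C); case: (q \in C); case: (r \in C) => //=;
  rewrite ?mulr1n ?mulr0n => h; (have := h ltac:(lra) ltac:(lra)); lra.
Qed.
End Key.

Lemma hyp_el n (X : {set 'I_n}) a : a \in X -> ~ hyp X (vec a a a 1 0 0).
Proof. by move=> aX; rewrite hyp_vec aX /= ?mulr1n ?mulr0n; lra. Qed.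

Theorem lemma8p7 (n s : nat) (Arr : {set {set 'I_n}})
    (pi : 'I_s -> {set {set 'I_n}}) (A B : {set 'I_n}) :
  zo_arrangement Arr -> nice_partition Arr pi -> conflicting Arr A B ->
  forall i : 'I_s, ~ (A \in pi i /\ B \in pi i).
Proof.
move=> zo [[_ [disj cover]] [_ nice]] [Ain [Bin [AneB conf]]] i [Ai Bi].
have An : A != set0 by apply: contraNneq zo => <-.
have Bn : B != set0 by apply: contraNneq zo => <-.
have [a aA] := set0Pn _ An.
have [b bB] := set0Pn _ Bn.
have meetP x : meet [set A; B] x <-> hyp A x /\ hyp B x.
  split; first by move=> h; split; apply: h; rewrite !inE eqxx ?orbT.
  by move=> [hA hB] I /set2P [] ->.
have [] := nice [set A; B].
- by apply/subsetP => I /set2P [] ->.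
- exists (vec a a a 1 0 0) => /meetP [] /(hyp_el aA) //.
move=> j [C [Cj [subC uniq]]].
have subA : sub_hyp (meet [set A; B]) A by move=> x /meetP [].
have subB : sub_hyp (meet [set A; B]) B by move=> x /meetP [].
have ji : j != i.
  apply/eqP => ji; subst j.
  by move/eqP: AneB; apply; rewrite (uniq _ Ai subA) (uniq _ Bi subB).
have CA : C != A.
  apply/eqP => e; subst C; have := disj _ _ ji.
  by move/disjointFr/(_ Cj); rewrite Ai.
have CB : C != B.
  apply/eqP => e; subst C; have := disj _ _ ji.
  by move/disjointFr/(_ Cj); rewrite Bi.
have CArr : C \in Arr by rewrite -cover; apply/bigcupP; exists j.
have C0 : C != set0 by apply: contraNneq zo => <-.
have H x : hyp A x -> hyp B x -> hyp C x by move=> hA hB; apply: subC; apply/meetP.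
have reg := regionP H; have out := outP H; have tri := tripleP H.
have C0' : forall X : {set 'I_n}, (forall x, (x \in C) = (x \in X)) -> C = X.
  by move=> X h; apply/setP => x; rewrite h.
case: conf => [[/set0Pn [r] /setIP [rA rB] [/subsetPn [p pA pB] /subsetPn [q qB qA]]] | [cases notin]].
- have := tri p q r pA pB qA qB rA rB.
  have ep x : x \in A -> x \notin B -> (x \in C) = (p \in C).
    by move=> xA xB; apply: reg; rewrite ?xA ?pA ?(negbTE xB) ?(negbTE pB).
  have eq' x : x \notin A -> x \in B -> (x \in C) = (q \in C).
    by move=> xA xB; apply: reg; rewrite ?xB ?qB ?(negbTE xA) ?(negbTE qA).
  have er x : x \in A -> x \in B -> (x \in C) = (r \in C).
    by move=> xA xB; apply: reg; rewrite ?xB ?rB ?xA ?rA.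
  case pC: (p \in C); case qC: (q \in C); case rC: (r \in C) => /=;
    rewrite ?mulr1n ?mulr0n => h; try (by clear -h; lra).
  + move/eqP: CA; apply; apply: C0' => x.
    case xA: (x \in A); case xB: (x \in B); rewrite ?inE ?xA ?xB /=;
      [rewrite er ?xA ?xB ?rC // | rewrite ep ?xA ?xB ?pC // |
       rewrite eq' ?xA ?xB ?qC // | apply/negbTE/out; rewrite ?xA ?xB //].
  + move/eqP: CB; apply; apply: C0' => x.
    case xA: (x \in A); case xB: (x \in B); rewrite ?inE ?xA ?xB /=;
      [rewrite er ?xA ?xB ?rC // | rewrite ep ?xA ?xB ?pC // |
       rewrite eq' ?xA ?xB ?qC // | apply/negbTE/out; rewrite ?xA ?xB //].
  + move/eqP: C0; apply; apply: C0' => x.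
    case xA: (x \in A); case xB: (x \in B); rewrite ?inE ?xA ?xB /=;
      [rewrite er ?xA ?xB ?rC // | rewrite ep ?xA ?xB ?pC // |
       rewrite eq' ?xA ?xB ?qC // | apply/negbTE/out; rewrite ?xA ?xB //].
- have notin' : forall X, C = X -> X = (A :\: B) :|: (B :\: A) -> False.
    by move=> X CX e; move: notin; rewrite -e -CX CArr.
  case: cases => [/eqP dAB | [/properP [sAB [q qB qA]] | /properP [sBA [p pA pB]]]].
  + have nAB x : x \in A -> x \in B -> false.
      move=> xA xB; have : x \in A :&: B by rewrite inE xA xB.
      by rewrite dAB inE.
    have aB : a \notin B by apply/negP => /(nAB _ aA).
    have bA : b \notin A by apply/negP => bA'; have := nAB _ bA' bB.
    have ea x : x \in A -> (x \in C) = (a \in C).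
      by move=> xA; apply: reg; rewrite ?xA ?aA ?(negbTE aB) //; apply/negbTE/negP => /(nAB _ xA).
    have eb x : x \in B -> (x \in C) = (b \in C).
      by move=> xB; apply: reg; rewrite ?xB ?bB ?(negbTE bA) //; apply/negbTE/negP => xA; have := nAB _ xA xB.
    have key : forall X : {set 'I_n}, (forall x, x \in A -> x \notin B -> (a \in C) = (x \in X)) ->
       (forall x, x \in B -> x \notin A -> (b \in C) = (x \in X)) ->
       (forall x, x \notin A -> x \notin B -> x \notin X) -> C = X.
      move=> X h1 h2 h3; apply: C0' => x.
      case xA: (x \in A); case xB: (x \in B).
      * by have := nAB _ xA xB.
      * by rewrite ea // (h1 x) // xB.
      * by rewrite eb // (h2 x) // xA.
      * by rewrite (negbTE (out _ _ _)) ?xA ?xB // (negbTE (h3 _ _ _)) ?xA ?xB.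
    case aC: (a \in C); case bC: (b \in C).
    * apply: (notin' (A :\: B :|: B :\: A)) => //; apply: key => x; rewrite ?inE;
        case: (x \in A); case: (x \in B) => //.
    * move/eqP: CA; apply; apply: key => x; rewrite ?inE;
        case: (x \in A); case: (x \in B) => //.
    * move/eqP: CB; apply; apply: key => x; rewrite ?inE;
        case: (x \in A); case: (x \in B) => //.
    * move/eqP: C0; apply; apply: key => x; rewrite ?inE;
        case: (x \in A); case: (x \in B) => //.
  + have aB : a \in B by apply: (subsetP sAB).
    have ea x : x \in A -> (x \in C) = (a \in C).
      by move=> xA; apply: reg; rewrite ?xA ?aA ?aB ?(subsetP sAB _ xA).
    have eq' x : x \in B -> x \notin A -> (x \in C) = (q \in C).
      by move=> xB xA; apply: reg; rewrite ?xB ?qB ?(negbTE qA) ?(negbTE xA).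
    have key : forall X : {set 'I_n}, (forall x, x \in A -> x \in B -> (a \in C) = (x \in X)) ->
       (forall x, x \in B -> x \notin A -> (q \in C) = (x \in X)) ->
       (forall x, x \notin A -> x \notin B -> x \notin X) -> C = X.
      move=> X h1 h2 h3; apply: C0' => x.
      case xA: (x \in A); case xB: (x \in B).
      * by rewrite ea // (h1 x).
      * by have := subsetP sAB _ xA; rewrite xB.
      * by rewrite eq' ?xA // (h2 x) // xA.
      * by rewrite (negbTE (out _ _ _)) ?xA ?xB // (negbTE (h3 _ _ _)) ?xA ?xB.
    case aC: (a \in C); case qC: (q \in C).
    * move/eqP: CB; apply; apply: key => x; rewrite ?inE;
        case: (x \in A); case: (x \in B) => //.
    * move/eqP: CA; apply; apply: key => x; rewrite ?inE;
        case: (x \in A); case: (x \in B) => //.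
    * apply: (notin' (A :\: B :|: B :\: A)) => //; apply: key => x; rewrite ?inE;
        case: (x \in A); case: (x \in B) => //.
    * move/eqP: C0; apply; apply: key => x; rewrite ?inE;
        case: (x \in A); case: (x \in B) => //.
  + have bA : b \in A by apply: (subsetP sBA).
    have eb x : x \in B -> (x \in C) = (b \in C).
      by move=> xB; apply: reg; rewrite ?xB ?bB ?bA ?(subsetP sBA _ xB).
    have ep x : x \in A -> x \notin B -> (x \in C) = (p \in C).
      by move=> xA xB; apply: reg; rewrite ?xA ?pA ?(negbTE pB) ?(negbTE xB).
    have key : forall X : {set 'I_n}, (forall x, x \in A -> x \in B -> (b \in C) = (x \in X)) ->
       (forall x, x \in A -> x \notin B -> (p \in C) = (x \in X)) ->
       (forall x, x \notin A -> x \notin B -> x \notin X) -> C = X.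
      move=> X h1 h2 h3; apply: C0' => x.
      case xA: (x \in A); case xB: (x \in B).
      * by rewrite eb // (h1 x).
      * by rewrite ep ?xB // (h2 x) // xB.
      * by have := subsetP sBA _ xB; rewrite xA.
      * by rewrite (negbTE (out _ _ _)) ?xA ?xB // (negbTE (h3 _ _ _)) ?xA ?xB.
    case bC: (b \in C); case pC: (p \in C).
    * move/eqP: CA; apply; apply: key => x; rewrite ?inE;
        case: (x \in A); case: (x \in B) => //.
    * move/eqP: CB; apply; apply: key => x; rewrite ?inE;
        case: (x \in A); case: (x \in B) => //.
    * apply: (notin' (A :\: B :|: B :\: A)) => //; apply: key => x; rewrite ?inE;
        case: (x \in A); case: (x \in B) => //.
    * move/eqP: C0; apply; apply: key => x; rewrite ?inE;
        case: (x \in A); case: (x \in B) => //.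
Qed.
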